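(* Let $\mathcal{V}$ be a finite vocabulary, fix a decoding context $c$, and let $P(\cdot\mid c)$ be a probability distribution on $\mathcal{V}$ with $p_t := P(t\mid c) > 0$ for all $t \in \mathcal{V}$. Let $\mathcal{V}$ be partitioned into $n \ge 1$ buckets, and let the required bucket $B$ be drawn uniformly at random from the $n$ buckets. Let $t^\star$ denote the token of highest $P(\cdot\mid c)$-probability within the required bucket $B$ (so $t^\star$ is a random token determined by $B$). For each possible value of $t^\star$, let $Q(\cdot\mid c)$ be any probability distribution on $\mathcal{V}$ satisfying $Q(t^\star\mid c) \ge Q(t\mid c)$ for all $t \in \mathcal{V}$, and let $Z_{t^\star}$ be defined as in the context below. Then \[ \mathbb{E}_{t^\star}\bigl[D_{\mathrm{KL}}(Q(\cdot\mid c)\,\|\,P(\cdot\mid c))\bigr] \;\ge\; \frac{n-1}{n}\,\mathbb{E}_{t^\star}\bigl[\log(1/Z_{t^\star})\bigr], \] where $Z_{t^\star} = (k+1)r + \sum_{t \in \mathcal{U}} p_t$ and $r = \bigl(p_{t^\star}\prod_{t \in \mathcal{C}} p_t\bigr)^{1/(k+1)}$ is the geometric mean of the pooled probabilities.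
   Context: $D_{\mathrm{KL}}(Q\|P) = \sum_{t} Q(t)\log\frac{Q(t)}{P(t)}$ (natural logarithm). For a fixed token $t^\star$, let $Q^*$ be the distribution minimizing $D_{\mathrm{KL}}(Q\|P(\cdot\mid c))$ over all probability distributions $Q$ on $\mathcal{V}$ with $Q(t^\star) \ge Q(t)$ for all $t\in\mathcal{V}$ (i.e., $t^\star$ is an argmax of $Q$). The ''pooled'' set is $\mathcal{C} := \{t \neq t^\star : Q^*(t) = Q^*(t^\star)\}$, with $k := |\mathcal{C}|$, and the ''unpooled'' set is $\mathcal{U} := \{t \neq t^\star : Q^*(t) < Q^*(t^\star)\}$. The quantities $r$ and $Z_{t^\star}$ are computed from these sets for the given $t^\star$. The expectation $\mathbb{E}_{t^\star}$ is over the uniformly random required bucket. *)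

(* Defs.v *)
From HB Require Import structures.
From mathcomp Require Import all_boot all_order all_algebra.
From mathcomp Require Import reals exp.
Set Implicit Arguments. Unset Strict Implicit. Unset Printing Implicit Defensive.
Import Order.TTheory GRing.Theory Num.Theory.
Local Open Scope ring_scope.

Section KLDefs.
Variables (R : realType) (V : finType).

Definition is_dist (Q : V -> R) : Prop :=
  (forall t, 0 <= Q t) /\ \sum_(t : V) Q t = 1.

(* D_KL(Q || P) = sum_t Q(t) log (Q(t)/P(t)), natural log.
   Terms with Q t = 0 vanish since 0 * _ = 0 (convention 0 log 0 = 0). *)
Definition KL (Q P : V -> R) : R := \sum_(t : V) Q t * ln (Q t / P t).

Definition feasible (ts : V) (Q : V -> R) : Prop :=
  is_dist Q /\ (forall t, Q t <= Q ts).

Definition is_KL_proj (P : V -> R) (ts : V) (Qs : V -> R) : Prop :=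
  feasible ts Qs /\ (forall Q, feasible ts Q -> KL Qs P <= KL Q P).

Definition pooled (ts : V) (Qs : V -> R) : {set V} :=
  [set t | (t != ts) && (Qs t == Qs ts)].
Definition unpooled (ts : V) (Qs : V -> R) : {set V} :=
  [set t | (t != ts) && (Qs t < Qs ts)].

Definition geo_r (P : V -> R) (ts : V) (Qs : V -> R) : R :=
  (P ts * \prod_(t in pooled ts Qs) P t) `^ ((#|pooled ts Qs|.+1)%:R^-1).

Definition Zts (P : V -> R) (ts : V) (Qs : V -> R) : R :=
  (#|pooled ts Qs|.+1)%:R * geo_r P ts Qs + \sum_(t in unpooled ts Qs) P t.

End KLDefs.

Definition Eunif (R : realType) (n : nat) (f : 'I_n -> R) : R :=
  n%:R^-1 * \sum_(b < n) f b.

(* Main.v *)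
Require Import Defs.
From HB Require Import structures.
From mathcomp Require Import all_boot all_order all_algebra.
From mathcomp Require Import reals exp.
From mathcomp Require Import ring lra.
Import Order.TTheory GRing.Theory Num.Theory.
Local Open Scope ring_scope.

Section L.
Variables (R : realType) (V : finType).

Lemma ln_le_sub1 (x : R) : 0 < x -> ln x <= x - 1.
Proof.
move=> x0; have := @le_ln1Dx R (x - 1).
have -> : 1 + (x - 1) = x by ring.
apply; lra.
Qed.

Lemma gibbs (Q W : V -> R) : (forall t, 0 <= Q t) -> (forall t, 0 < W t) ->
  \sum_t Q t = 1 -> \sum_t W t <= 1 -> 0 <= \sum_t Q t * ln (Q t / W t).
Proof.
move=> Q0 W0 sQ sW.
have H : forall t, Q t - W t <= Q t * ln (Q t / W t).
  move=> t; have [->|qp] := eqVneq (Q t) 0.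
    by rewrite mul0r sub0r oppr_le0 ltW.
  have qg : 0 < Q t by rewrite lt_def qp Q0.
  have wq : 0 < W t / Q t by rewrite divr_gt0.
  have -> : Q t / W t = (W t / Q t)^-1 by rewrite invf_div.
  rewrite lnV ?posrE //.
  have := @ln_le_sub1 _ wq.
  have -> : Q t - W t = - (Q t * (W t / Q t - 1)).
    by rewrite mulrBr mulr1 mulrCA mulfV ?gt_eqF // mulr1 opprB.
  rewrite mulrN lerN2 => h; rewrite ler_pM2l //.
apply: le_trans (ler_sum _ (fun t _ => H t)).
rewrite sumrB sQ; lra.
Qed.

Lemma ln_prod (A : {set V}) (P : V -> R) : (forall t, 0 < P t) ->
  0 < \prod_(t in A) P t /\ ln (\prod_(t in A) P t) = \sum_(t in A) ln (P t).
Proof.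
move=> Pp.
apply: (big_ind2 (fun p s => 0 < p /\ ln p = s)).
- by rewrite ln1.
- move=> x1 x2 y1 y2 [h1 e1] [h2 e2]; split; first exact: mulr_gt0.
  by rewrite lnM ?posrE // e1 e2.
- by move=> t _; split.
Qed.

Lemma KL_ge_lnZ (P : V -> R) ts (Qs : V -> R) : is_dist P -> (forall t, 0 < P t) ->
  feasible ts Qs -> ln (1 / Zts P ts Qs) <= KL Qs P.
Proof.
move=> [P0 sP] Pp [[Q0 sQ] Qle].
set C := pooled ts Qs; set U := unpooled ts Qs.
set k := #|C|.
set r := geo_r P ts Qs.
set Z := Zts P ts Qs.
set C' := ts |: C.
have tsC : ts \notin C by rewrite inE eqxx.
have inU : forall t, (t \in U) = (t \notin C').
  move=> t; rewrite !inE; have [->|nt] //= := eqVneq t ts.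
  by rewrite lt_def andbC Qle /= eq_sym.
have inC' : forall t, t \in C' -> Qs t = Qs ts.
  by move=> t; rewrite !inE => /orP[/eqP->|/andP[_ /eqP]].
have [pp lp] := @ln_prod C P Pp.
have rp : 0 < r by rewrite /r /geo_r powR_gt0 // mulr_gt0.
have lr : ln r = (k.+1)%:R^-1 * (ln (P ts) + \sum_(t in C) ln (P t)).
  by rewrite /r /geo_r ln_powR lnM ?posrE // lp.
have sU0 : 0 <= \sum_(t in U) P t by apply: sumr_ge0.
have Zp : 0 < Z.
  rewrite /Z /Zts -/C -/U -/k -/r; apply: ltr_wpDr => //.
  by rewrite mulr_gt0.
pose W t := if t \in C' then r / Z else P t / Z.
have Wp : forall t, 0 < W t.
  by move=> t; rewrite /W; case: ifP => _; rewrite divr_gt0.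
have sW : \sum_t W t = 1.
  rewrite (bigID (fun t => t \in C')) /=.
  rewrite (eq_bigr (fun _ => r / Z)); last by move=> t h; rewrite /W h.
  rewrite [X in _ + X](eq_bigr (fun t => P t / Z)); last by move=> t /negbTE h; rewrite /W h.
  rewrite sumr_const -mulr_suml.
  rewrite (eq_bigl (fun t => t \in U)); last by move=> t; rewrite inU.
  have cc : #|[pred t | t \in C']| = k.+1.
    by rewrite -/(#|C'|) cardsU1 tsC.
  rewrite cc -mulrnAl -mulrDl -/(Zts P ts Qs) -/Z.
  rewrite [_ *+ _ + _](_ : _ = Z) ?divff ?gt_eqF //.
  by rewrite /Z /Zts mulr_natl.
have sW1 : \sum_t W t <= 1 by rewrite sW.
have G := @gibbs Qs W Q0 Wp sQ sW1.
have split : KL Qs P = \sum_t Qs t * ln (Qs t / W t) + \sum_t Qs t * ln (W t / P t).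
  rewrite /KL -big_split /=; apply: eq_bigr => t _.
  have [->|qp] := eqVneq (Qs t) 0; first by rewrite !mul0r addr0.
  have qg : 0 < Qs t by rewrite lt_def qp Q0.
  rewrite -mulrDr -lnM ?posrE ?divr_gt0 //.
  by rewrite mulrA divfK // gt_eqF.
have term : forall t, Qs t * ln (W t / P t) =
   Qs t * (- ln Z) + (if t \in C' then Qs ts * (ln r - ln (P t)) else 0).
  move=> t; rewrite /W; case: ifP => tC.
    rewrite inC' // -mulrDr; congr (_ * _).
    rewrite ln_div ?posrE ?divr_gt0 // ln_div ?posrE //; ring.
  rewrite addr0 mulrAC divff ?gt_eqF // mul1r lnV ?posrE //.
have sum2 : \sum_t Qs t * ln (W t / P t) = - ln Z.
  rewrite (eq_bigr _ (fun t _ => term t)) big_split /= -mulr_suml sQ mul1r.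
  rewrite -big_mkcond /= -mulr_sumr big_setU1 //= sumrB sumr_const lr.
  rewrite -mulr_natr -/k -[k.+1]addn1 natrD.
  have hk : (k%:R + 1%:R : R) != 0 by rewrite -natrD pnatr_eq0 addn1.
  set a := ln (P ts); set b := \sum_(t in C) _.
  by field.
rewrite split sum2 mul1r lnV ?posrE //; lra.
Qed.
End L.

Theorem theorem7p1 (R : realType) (V : finType) (P : V -> R) (n : nat)
    (bucket : V -> 'I_n) (tstar : 'I_n -> V)
    (Q : V -> V -> R) (Qs : V -> V -> R) :
  is_dist P ->
  (forall t, 0 < P t) ->
  (0 < n)%N ->
  (* tstar b is a token of highest P-probability in bucket b *)
  (forall b, bucket (tstar b) = b) ->
  (forall b t, bucket t = b -> P t <= P (tstar b)) ->
  (* for each possible value ts of t*, Q ts is a distribution with ts as argmax *)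
  (forall ts, feasible ts (Q ts)) ->
  (* Qs ts is the KL-minimizer Q* for ts *)
  (forall ts, is_KL_proj P ts (Qs ts)) ->
  Eunif (fun b => KL (Q (tstar b)) P) >=
    (n%:R - 1) / n%:R * Eunif (fun b => ln (1 / Zts P (tstar b) (Qs (tstar b)))).
Proof.
move=> hP Pp n0 _ _ feas proj.
have H1 : forall b, ln (1 / Zts P (tstar b) (Qs (tstar b))) <= KL (Q (tstar b)) P.
  move=> b; have [fs opt] := proj (tstar b).
  exact: le_trans (KL_ge_lnZ _ _ _ _ _ hP Pp fs) (opt _ (feas _)).
have H0 : forall b, 0 <= KL (Q (tstar b)) P.
  move=> b; have [[q0 sq] _] := feas (tstar b).
  have [_ sP] := hP.
  apply: (@gibbs _ _ (Q (tstar b)) P q0 Pp sq); by rewrite sP.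
rewrite /Eunif.
have S1 : \sum_(b < n) ln (1 / Zts P (tstar b) (Qs (tstar b))) <= \sum_(b < n) KL (Q (tstar b)) P.
  by apply: ler_sum => b _; apply: H1.
have S0 : 0 <= \sum_(b < n) KL (Q (tstar b)) P by apply: sumr_ge0 => b _.
move: S1 S0.
set S := \sum_(b < n) ln _.
set K := \sum_(b < n) KL _ _.
move=> S1 S0.
have np : (0 : R) < n%:R by rewrite ltr0n.
have x0 : (0 : R) < n%:R^-1 by rewrite invr_gt0.
have n1 : (1 : R) <= n%:R by rewrite ler1n.
have c0 : 0 <= (n%:R - 1) / (n%:R : R) by rewrite divr_ge0 // subr_ge0.
have c1 : (n%:R - 1) / (n%:R : R) <= 1 by rewrite ler_pdivrMr // mul1r lerBlDr lerDl.
move: c0 c1 x0.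
set c := (n%:R - 1) / _.
set x := n%:R^-1.
clearbody S K c x => c0 c1 x0.
have [Sp|Sn] := leP 0 S.
  have hx : 0 <= x * S by nra.
  have h1 : c * (x * S) <= x * S by nra.
  have h2 : x * S <= x * K by nra.
  exact: le_trans h1 h2.
have hx : x * S <= 0 by nra.
have h1 : c * (x * S) <= 0 by nra.
have h2 : 0 <= x * K by nra.
exact: le_trans h1 h2.
Qed.
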